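(* Let $\mathcal T$ and $\mathcal S$ be triangulated categories and let $T:\mathcal S\to\mathcal T$ be a triangle functor. Suppose $T$ has a left (respectively right) adjoint $S$. Let $M$ be an object of $\mathcal S$. Then the following are equivalent: (1) $M$ is $T$-relative projective (respectively injective); (2) $M$ is in $\mathrm{add}(\mathrm{im}(S))$; (3) $M$ is a direct factor of $S(L)$ for some object $L$ of $\mathcal T$; (4) $M$ is a direct factor of $ST(M)$.
   Context: An object $Q$ of $\mathcal S$ is $T$-relative projective if the natural transformation $\mathcal S(Q,-)\to\mathcal T(TQ,T-)$ induced by $T$ is injective, and $T$-relative injective if the natural transformation $\mathcal S(-,Q)\to\mathcal T(T-,TQ)$ induced by $T$ is injective. $\mathrm{add}(\mathrm{im}(S))$ is the full subcategory of direct summands of finite direct sums of objects in the image of $S$. *)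

(* Defs.v *)
From HB Require Import structures.
From mathcomp Require Import all_boot all_algebra.
Set Implicit Arguments. Unset Strict Implicit. Unset Printing Implicit Defensive.
Import GRing.Theory.
Local Open Scope ring_scope.

Record PreAdd := {
  Obj :> Type;
  Hom : Obj -> Obj -> zmodType;
  idm : forall X, Hom X X;
  cmp : forall X Y Z, Hom Y Z -> Hom X Y -> Hom X Z;
  cmpA : forall X Y Z W (h : Hom Z W) (g : Hom Y Z) (f : Hom X Y),
      cmp h (cmp g f) = cmp (cmp h g) f;
  cmp1l : forall X Y (f : Hom X Y), cmp (idm Y) f = f;
  cmp1r : forall X Y (f : Hom X Y), cmp f (idm X) = f;
  cmpDl : forall X Y Z (g g' : Hom Y Z) (f : Hom X Y),
      cmp (g + g') f = cmp g f + cmp g' f;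
  cmpDr : forall X Y Z (g : Hom Y Z) (f f' : Hom X Y),
      cmp g (f + f') = cmp g f + cmp g f'
}.
Arguments Hom {C} X Y : rename.
Arguments idm {C} X : rename.
Arguments cmp {C X Y Z} g f : rename.

Definition is_iso (C : PreAdd) (X Y : C) (f : Hom X Y) : Prop :=
  exists g : Hom Y X, cmp g f = idm X /\ cmp f g = idm Y.

Definition is_zero_obj (C : PreAdd) (Z : C) : Prop :=
  (forall X (f g : Hom Z X), f = g) /\ (forall X (f g : Hom X Z), f = g).

Definition is_biprod (C : PreAdd) (A B X : C)
  (i1 : Hom A X) (p1 : Hom X A) (i2 : Hom B X) (p2 : Hom X B) : Prop :=
  [/\ cmp p1 i1 = idm A, cmp p2 i2 = idm B, cmp p1 i2 = 0, cmp p2 i1 = 0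
    & cmp i1 p1 + cmp i2 p2 = idm X].

Definition is_dsum (C : PreAdd) (n : nat) (A : 'I_n -> C) (X : C)
  (i : forall k, Hom (A k) X) (p : forall k, Hom X (A k)) : Prop :=
  [/\ forall k, cmp (p k) (i k) = idm (A k),
      forall j k, j != k -> cmp (p j) (i k) = 0
    & \sum_(k < n) cmp (i k) (p k) = idm X].

Definition direct_summand (C : PreAdd) (M X : C) : Prop :=
  exists (N : C) (i1 : Hom M X) (p1 : Hom X M) (i2 : Hom N X) (p2 : Hom X N),
    is_biprod i1 p1 i2 p2.

Record AddCat := {
  preadd :> PreAdd;
  zobj : preadd;
  zobj_zero : is_zero_obj zobj;
  biprod_ex : forall A B : preadd, exists (X : preadd) (i1 : Hom A X) (p1 : Hom X A)
      (i2 : Hom B X) (p2 : Hom X B), is_biprod i1 p1 i2 p2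
}.

Record Functor (C D : PreAdd) := {
  fo :> C -> D;
  fm : forall X Y : C, Hom X Y -> Hom (fo X) (fo Y);
  fm1 : forall X, fm (idm X) = idm (fo X);
  fmC : forall X Y Z (g : Hom Y Z) (f : Hom X Y), fm (cmp g f) = cmp (fm g) (fm f)
}.
Arguments fm {C D} F {X Y} f : rename.

Definition additive_functor (C D : PreAdd) (F : Functor C D) : Prop :=
  forall X Y (f g : Hom X Y), fm F (f + g) = fm F f + fm F g.

(* Triangulated category (axioms TR1-TR4); the suspension Sig is an
   additive autoequivalence. *)
Record TriCat := {
  tcat :> AddCat;
  Sig : Functor tcat tcat;
  Sig_add : additive_functor Sig;
  Sig_ff : forall X Y : tcat, bijective (@fm _ _ Sig X Y);
  Sig_es : forall Y : tcat, exists (X : tcat) (u : Hom (Sig X) Y), is_iso u;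
  dist : forall X Y Z : tcat, Hom X Y -> Hom Y Z -> Hom Z (Sig X) -> Prop;
  TR1_iso : forall (X Y Z X' Y' Z' : tcat)
      (f : Hom X Y) (g : Hom Y Z) (h : Hom Z (Sig X))
      (f' : Hom X' Y') (g' : Hom Y' Z') (h' : Hom Z' (Sig X'))
      (a : Hom X X') (b : Hom Y Y') (c : Hom Z Z'),
      is_iso a -> is_iso b -> is_iso c ->
      cmp b f = cmp f' a -> cmp c g = cmp g' b -> cmp (fm Sig a) h = cmp h' c ->
      dist f g h -> dist f' g' h';
  TR1_id : forall X : tcat,
      dist (idm X) (0 : Hom X (zobj tcat)) (0 : Hom (zobj tcat) (Sig X));
  TR1_ex : forall (X Y : tcat) (f : Hom X Y),
      exists (Z : tcat) (g : Hom Y Z) (h : Hom Z (Sig X)), dist f g h;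
  TR2 : forall (X Y Z : tcat) (f : Hom X Y) (g : Hom Y Z) (h : Hom Z (Sig X)),
      dist f g h <-> dist g h (- fm Sig f);
  TR3 : forall (X Y Z X' Y' Z' : tcat)
      (f : Hom X Y) (g : Hom Y Z) (h : Hom Z (Sig X))
      (f' : Hom X' Y') (g' : Hom Y' Z') (h' : Hom Z' (Sig X'))
      (a : Hom X X') (b : Hom Y Y'),
      dist f g h -> dist f' g' h' -> cmp b f = cmp f' a ->
      exists c : Hom Z Z', cmp c g = cmp g' b /\ cmp (fm Sig a) h = cmp h' c;
  TR4 : forall (X Y Z Z' X' Y' : tcat) (f : Hom X Y) (g : Hom Y Z)
      (j : Hom Y Z') (k : Hom Z' (Sig X))
      (l : Hom Z X') (i : Hom X' (Sig Y))
      (m : Hom Z Y') (n : Hom Y' (Sig X)),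
      dist f j k -> dist g l i -> dist (cmp g f) m n ->
      exists (u : Hom Z' Y') (v : Hom Y' X'),
        [/\ dist u v (cmp (fm Sig j) i), cmp u j = cmp m g, cmp v m = l,
            cmp n u = k & cmp i v = cmp (fm Sig f) n]
}.
Arguments Sig {t} : rename.
Arguments dist {t X Y Z} f g h : rename.

Record TriFunctor (C D : TriCat) := {
  tfun :> Functor C D;
  tf_add : additive_functor tfun;
  tf_phi : forall X : C, Hom (tfun (Sig X)) (Sig (tfun X));
  tf_phi_iso : forall X, is_iso (tf_phi X);
  tf_phi_nat : forall (X Y : C) (f : Hom X Y),
      cmp (tf_phi Y) (fm tfun (fm Sig f)) = cmp (fm Sig (fm tfun f)) (tf_phi X);
  tf_dist : forall (X Y Z : C) (f : Hom X Y) (g : Hom Y Z) (h : Hom Z (Sig X)),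
      dist f g h -> dist (fm tfun f) (fm tfun g) (cmp (tf_phi X) (fm tfun h))
}.

(* L is left adjoint to R (unit/counit with triangle identities). *)
Definition adjunction (C D : PreAdd) (L : Functor D C) (R : Functor C D) : Prop :=
  exists (eta : forall Y : D, Hom Y (R (L Y))) (eps : forall X : C, Hom (L (R X)) X),
    [/\ forall (Y Y' : D) (f : Hom Y Y'), cmp (eta Y') f = cmp (fm R (fm L f)) (eta Y),
        forall (X X' : C) (f : Hom X X'), cmp f (eps X) = cmp (eps X') (fm L (fm R f)),
        forall Y : D, cmp (eps (L Y)) (fm L (eta Y)) = idm (L Y)
      & forall X : C, cmp (fm R (eps X)) (eta (R X)) = idm (R X)].

Definition rel_projective (C D : PreAdd) (T : Functor C D) (Q : C) : Prop :=
  forall (Y : C) (f g : Hom Q Y), fm T f = fm T g -> f = g.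

Definition rel_injective (C D : PreAdd) (T : Functor C D) (Q : C) : Prop :=
  forall (Y : C) (f g : Hom Y Q), fm T f = fm T g -> f = g.

Definition in_add_im (C D : PreAdd) (S : Functor D C) (M : C) : Prop :=
  exists (n : nat) (L : 'I_n -> D) (X : C)
    (i : forall k, Hom (S (L k)) X) (p : forall k, Hom X (S (L k))),
    is_dsum i p /\ direct_summand M X.

(* Main.v *)
From Pilot Require Import Defs.
From mathcomp Require Import all_boot all_algebra.
Import Pilot.Defs.
Set Implicit Arguments. Unset Strict Implicit. Unset Printing Implicit Defensive.
Import GRing.Theory.
Local Open Scope ring_scope.

Section PA.
Variable C : PreAdd.
Implicit Types X Y Z W : C.

Lemma cmp0l X Y Z (f : Hom X Y) : cmp (0 : Hom Y Z) f = 0.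
Proof.
have H := cmpDl (0 : Hom Y Z) 0 f; rewrite addr0 in H.
by apply: (addrI (cmp (0 : Hom Y Z) f)); rewrite addr0 -H.
Qed.

Lemma cmp0r X Y Z (g : Hom Y Z) : cmp g (0 : Hom X Y) = 0.
Proof.
have H := cmpDr g (0 : Hom X Y) 0; rewrite addr0 in H.
by apply: (addrI (cmp g (0 : Hom X Y))); rewrite addr0 -H.
Qed.

Lemma cmpNl X Y Z (g : Hom Y Z) (f : Hom X Y) : cmp (- g) f = - cmp g f.
Proof. by apply: (addrI (cmp g f)); rewrite -cmpDl !subrr cmp0l. Qed.

Lemma cmpNr X Y Z (g : Hom Y Z) (f : Hom X Y) : cmp g (- f) = - cmp g f.
Proof. by apply: (addrI (cmp g f)); rewrite -cmpDr !subrr cmp0r. Qed.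

Lemma cmpBl X Y Z (g g' : Hom Y Z) (f : Hom X Y) : cmp (g - g') f = cmp g f - cmp g' f.
Proof. by rewrite cmpDl cmpNl. Qed.

Lemma cmpBr X Y Z (g : Hom Y Z) (f f' : Hom X Y) : cmp g (f - f') = cmp g f - cmp g f'.
Proof. by rewrite cmpDr cmpNr. Qed.

Lemma cmp_suml X Y Z n (F : 'I_n -> Hom Y Z) (f : Hom X Y) :
  cmp (\sum_(k < n) F k) f = \sum_(k < n) cmp (F k) f.
Proof. by apply: (big_morph (fun g => cmp g f)); [move=> x y; exact: cmpDl | exact: cmp0l]. Qed.

Lemma cmp_sumr X Y Z n (F : 'I_n -> Hom X Y) (g : Hom Y Z) :
  cmp g (\sum_(k < n) F k) = \sum_(k < n) cmp g (F k).
Proof. by apply: (big_morph (fun f => cmp g f)); [move=> x y; exact: cmpDr | exact: cmp0r]. Qed.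

End PA.

Lemma fm0 (C D : PreAdd) (F : Functor C D) (Hadd : additive_functor F) (X Y : C) :
  fm F (0 : Hom X Y) = 0.
Proof.
have H := Hadd X Y 0 0; rewrite addr0 in H.
by apply: (addrI (fm F (0 : Hom X Y))); rewrite addr0 -H.
Qed.

Lemma fmN (C D : PreAdd) (F : Functor C D) (Hadd : additive_functor F) (X Y : C) (f : Hom X Y) :
  fm F (- f) = - fm F f.
Proof. by apply: (addrI (fm F f)); rewrite -Hadd !subrr fm0. Qed.

Section Tri.
Variable C : TriCat.

Lemma Sig0 (X Y : C) : fm Sig (0 : Hom X Y) = 0.
Proof. exact: fm0 (@Sig_add C) X Y. Qed.

Lemma Sig_inj (X Y : C) (f g : Hom X Y) : fm Sig f = fm Sig g -> f = g.
Proof. exact: (bij_inj (Sig_ff X Y)). Qed.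

Lemma Sig_surj (X Y : C) (h : Hom (Sig X) (Sig Y)) : exists f : Hom X Y, fm Sig f = h.
Proof. case: (Sig_ff X Y) => g _ c2; by exists (g h); rewrite c2. Qed.

Lemma dist_comp0 (X Y Z : C) (f : Hom X Y) (g : Hom Y Z) (h : Hom Z (Sig X)) :
  dist f g h -> cmp g f = 0.
Proof.
move=> H.
have [c [Hc _]] := TR3 (TR1_id X) H (a := idm X) (b := f) erefl.
by rewrite -Hc cmp0r.
Qed.

Lemma dist_exact (X Y Z W : C) (f : Hom X Y) (g : Hom Y Z) (h : Hom Z (Sig X))
  (u : Hom W Y) : dist f g h -> cmp g u = 0 -> exists v : Hom W X, cmp f v = u.
Proof.
move=> H gu.
have H2 := (TR2 f g h).1 H.
have H1 := (TR2 _ _ _).1 (TR1_id W).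
have [c [_ Hc]] := TR3 H1 H2 (a := u) (b := (0 : Hom (zobj C) Z)) (ltac:(by rewrite cmp0r gu)).
have [v Hv] := Sig_surj c.
exists v; apply: Sig_inj.
move: Hc; rewrite fm1 cmpNr cmp1r cmpNl -Hv -fmC => /oppr_inj.
by [].
Qed.

Lemma mono_summand (M X : C) (g : Hom M X) :
  (forall W (a : Hom W M), cmp g a = 0 -> a = 0) -> direct_summand M X.
Proof.
move=> mono.
have [N [q [k H]]] := TR1_ex g.
have H2 := (TR2 _ _ _).1 H.
have Hk0 := dist_comp0 ((TR2 _ _ _).1 H2).
have k0 : k = 0.
  have [N' [u [u' [uu' u'u]]]] := Sig_es N.
  have [k' Hk'] := Sig_surj (cmp k u).
  have : cmp g k' = 0.
    apply: Sig_inj; rewrite fmC Hk' Sig0 cmpA.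
    apply: oppr_inj; rewrite -!cmpNl oppr0.
    by rewrite (_ : cmp (- fm Sig g) k = 0) ?cmp0l //.
  move/mono => k'0.
  have ku : cmp k u = 0 by rewrite -Hk' k'0 Sig0.
  by rewrite -(cmp1r k) -u'u cmpA ku cmp0l.
have [i qi] := dist_exact (u := idm N) H2 (ltac:(by rewrite k0 cmp0l)).
have qg := dist_comp0 H.
have [r gr] := dist_exact (u := idm X - cmp i q) H
  (ltac:(by rewrite cmpBr cmp1r cmpA qi cmp1l subrr)).
exists N, g, r, i, q; split => //.
- apply/eqP; rewrite -subr_eq0; apply/eqP/mono.
  by rewrite cmpBr cmpA gr cmpBl cmp1l cmp1r -cmpA qg cmp0r subr0 subrr.
- apply/mono; by rewrite cmpA gr cmpBl cmp1l -cmpA qi cmp1r subrr.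
- by rewrite gr subrK.
Qed.

Lemma epi_summand (M X : C) (g : Hom X M) :
  (forall W (w : Hom M W), cmp w g = 0 -> w = 0) -> direct_summand M X.
Proof.
move=> epi.
have [Z [w [h H]]] := TR1_ex g.
have w0 := epi _ _ (dist_comp0 H).
have [s gs] := dist_exact (u := idm M) H (ltac:(by rewrite w0 cmp0l)).
apply: (mono_summand (g := s)) => W a sa.
by rewrite -(cmp1l a) -gs -cmpA sa cmp0r.
Qed.

End Tri.
Section Main.

Lemma proj_case (SS TT : TriCat) (T : TriFunctor SS TT) (S : Functor TT SS) :
  adjunction S T -> forall M : SS,
      [<-> rel_projective T M;
           in_add_im S M;
           exists L : TT, direct_summand M (S L);
           direct_summand M (S (T M))].
Proof.
move=> [eta [eps [neta neps tri1 tri2]]] M.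
have SLproj : forall (L : TT) (Y : SS) (a b : Hom (S L) Y), fm T a = fm T b -> a = b.
  move=> L Y a b Hab.
  have E : forall c : Hom (S L) Y, c = cmp (eps Y) (fm S (cmp (fm T c) (eta L))).
    move=> c; by rewrite fmC cmpA -neps -cmpA tri1 cmp1r.
  by rewrite (E a) (E b) Hab.
have P3P1 : direct_summand M (S (T M)) -> in_add_im S M.
  move=> HM; exists 1%N, (fun _ => T M), (S (T M)), (fun _ => idm _), (fun _ => idm _).
  split => //; split.
  - by move=> k; rewrite cmp1l.
  - by move=> j k; rewrite !ord1.
  - by rewrite big_ord1 cmp1l.
have P0P3 : rel_projective T M -> direct_summand M (S (T M)).
  move=> HP; apply: (epi_summand (g := eps M)) => W w Hw.
  apply: HP.
  have -> : fm T w = cmp (fm T w) (cmp (fm T (eps M)) (eta (T M))) by rewrite tri2 cmp1r.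
  by rewrite cmpA -fmC Hw !(fm0 (tf_add T)) cmp0l.
have summ : forall X : SS, (forall (Y : SS) (f g : Hom X Y), fm T f = fm T g -> f = g) ->
    direct_summand M X -> rel_projective T M.
  move=> X HX [N [i1 [p1 [i2 [p2 [H1 H2 H3 H4 H5]]]]]].
  move=> Y f g Hfg; rewrite -(cmp1r f) -(cmp1r g) -H1 !cmpA; congr (cmp _ _).
  by apply: HX; rewrite !fmC Hfg.
split; first by move=> /P0P3 /P3P1.
split.
  move=> [n [L [X [i [p [[Hpi Hpj Hsum] HMX]]]]]].
  have HX : forall (Y : SS) (f g : Hom X Y), fm T f = fm T g -> f = g.
    move=> Y f g Hfg.
    rewrite -(cmp1r f) -(cmp1r g) -Hsum !cmp_sumr; apply: eq_bigr => k _.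
    rewrite !cmpA; congr (cmp _ _); apply: SLproj.
    by rewrite !fmC Hfg.
  by exists (T M); apply: P0P3; apply: (summ X).
split.
  by move=> [L HL]; apply: P0P3; apply: (summ _ (SLproj L)).
by move=> HM; apply: (summ _ (SLproj (T M))).
Qed.
End Main.
Lemma inj_case (SS TT : TriCat) (T : TriFunctor SS TT) (S : Functor TT SS) :
  adjunction T S -> forall M : SS,
      [<-> rel_injective T M;
           in_add_im S M;
           exists L : TT, direct_summand M (S L);
           direct_summand M (S (T M))].
Proof.
move=> [eta [eps [neta neps tri1 tri2]]] M.
have SLinj : forall (L : TT) (Y : SS) (a b : Hom Y (S L)), fm T a = fm T b -> a = b.
  move=> L Y a b Hab.
  have E : forall c : Hom Y (S L), c = cmp (fm S (cmp (eps L) (fm T c))) (eta Y).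
    move=> c; by rewrite fmC -cmpA -neta cmpA tri2 cmp1l.
  by rewrite (E a) (E b) Hab.
have P3P1 : direct_summand M (S (T M)) -> in_add_im S M.
  move=> HM; exists 1%N, (fun _ => T M), (S (T M)), (fun _ => idm _), (fun _ => idm _).
  split => //; split.
  - by move=> k; rewrite cmp1l.
  - by move=> j k; rewrite !ord1.
  - by rewrite big_ord1 cmp1l.
have P0P3 : rel_injective T M -> direct_summand M (S (T M)).
  move=> HP; apply: (mono_summand (g := eta M)) => W a Ha.
  apply: HP.
  have -> : fm T a = cmp (cmp (eps (T M)) (fm T (eta M))) (fm T a) by rewrite tri1 cmp1l.
  by rewrite -cmpA -fmC Ha !(fm0 (tf_add T)) cmp0r.
have summ : forall X : SS, (forall (Y : SS) (f g : Hom Y X), fm T f = fm T g -> f = g) ->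
    direct_summand M X -> rel_injective T M.
  move=> X HX [N [i1 [p1 [i2 [p2 [H1 H2 H3 H4 H5]]]]]].
  move=> Y f g Hfg; rewrite -(cmp1l f) -(cmp1l g) -H1 -!cmpA; congr (cmp _ _).
  by apply: HX; rewrite !fmC Hfg.
split; first by move=> /P0P3 /P3P1.
split.
  move=> [n [L [X [i [p [[Hpi Hpj Hsum] HMX]]]]]].
  have HX : forall (Y : SS) (f g : Hom Y X), fm T f = fm T g -> f = g.
    move=> Y f g Hfg.
    rewrite -(cmp1l f) -(cmp1l g) -Hsum !cmp_suml; apply: eq_bigr => k _.
    rewrite -!cmpA; congr (cmp _ _); apply: SLinj.
    by rewrite !fmC Hfg.
  by exists (T M); apply: P0P3; apply: (summ X).
split.
  by move=> [L HL]; apply: P0P3; apply: (summ _ (SLinj L)).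
by move=> HM; apply: (summ _ (SLinj (T M))).
Qed.

Theorem proposition2p10 :
  (forall (SS TT : TriCat) (T : TriFunctor SS TT) (S : Functor TT SS),
      adjunction S T ->
      forall M : SS,
      [<-> rel_projective T M;
           in_add_im S M;
           exists L : TT, direct_summand M (S L);
           direct_summand M (S (T M))]) /\
  (forall (SS TT : TriCat) (T : TriFunctor SS TT) (S : Functor TT SS),
      adjunction T S ->
      forall M : SS,
      [<-> rel_injective T M;
           in_add_im S M;
           exists L : TT, direct_summand M (S L);
           direct_summand M (S (T M))]).
Proof. split; [exact: proj_case | exact: inj_case]. Qed.
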